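(* Let $n\ge1$, $r>0$, let $\lambda_1<\lambda_2<\cdots$ be the positive roots of $J_{n/2}$, and define $u_{2j-1}=u_{2j}=-\left(\frac{\lambda_j}{\pi r}\right)^2$ for $j\ge1$. Then there is a constant $C$ (depending on $n$ and $r$ only) such that for all $1\le M\le\infty$, all integers $0\le k<M$, and all $z=x\pm ix$ with $x<0$, \[ \prod_{j=k+1}^M\frac{1}{|1-z/u_j|^2}\le C^{\sqrt{|x|}}. \]
   Context: $J_{n/2}$ is the Bessel function of the first kind of order $n/2$. For $M=\infty$ the product is the infinite product over $j\ge k+1$. *)

(* Defs.v *)
From Stdlib Require Import Reals Arith Factorial ClassicalEpsilon.
Open Scope R_scope.

(* gamma_half k = Gamma(k/2) for k >= 1, via Gamma(1/2)=sqrt pi, Gamma(1)=1,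
   Gamma(s+1) = s Gamma(s).  (gamma_half 0 is a junk value.) *)
Fixpoint gamma_half (k : nat) : R :=
  match k with
  | O => 0
  | S O => sqrt PI
  | S (S O) => 1
  | S (S k' as k1) => (INR k' / 2) * gamma_half k'
  end.

(* m-th term of the series of J_{n/2}(t) (t > 0):
   (-1)^m / (m! Gamma(m + n/2 + 1)) * (t/2)^(2m + n/2). *)
Definition bessel_term (n : nat) (t : R) (m : nat) : R :=
  (-1) ^ m / (INR (fact m) * gamma_half (2 * m + n + 2))
  * Rpower (t / 2) (INR (2 * m) + INR n / 2).

Definition bessel_J_half (n : nat) (t : R) : R :=
  epsilon (inhabits 0) (fun l => infinite_sum (bessel_term n t) l).

(* |1 - z/u|^2 for z = a + i b and u a nonzero real number. *)
Definition abs2_one_minus_div (a b u : R) : R :=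
  (1 - a / u) ^ 2 + (b / u) ^ 2.

(* prod_{j=k+1}^{M} f j  (empty product = 1 when M <= k). *)
Fixpoint prod_range (f : nat -> R) (k M : nat) : R :=
  match M with
  | O => 1
  | S M' => if Nat.leb (S M') k then 1 else prod_range f k M' * f (S M')
  end.

(* Main.v *)
Require Import Defs.
From Stdlib Require Import Reals Lra Lia Psatz Arith ZArith Wf_nat ClassicalEpsilon.
From Coquelicot Require Import Coquelicot.
Open Scope R_scope.


Lemma gamma_half_SS k : (1 <= k)%nat -> gamma_half (S (S k)) = INR k / 2 * gamma_half k.
Proof. intros H. destruct k as [|k]; [lia|]. reflexivity. Qed.

Lemma gamma_half_pos k : (1 <= k)%nat -> 0 < gamma_half k.
Proof.
  intros H. induction k as [k IH] using lt_wf_ind.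
  destruct k as [|[|[|k]]]; try lia.
  - simpl. apply sqrt_lt_R0, PI_RGT_0.
  - simpl. lra.
  - rewrite gamma_half_SS by lia. apply Rmult_lt_0_compat.
    + apply Rmult_lt_0_compat; [apply lt_0_INR; lia| lra].
    + apply IH; lia.
Qed.

Definition bc (n : nat) (m : nat) : R :=
  (-1) ^ m / (INR (fact m) * gamma_half (2 * m + n + 2)).

Lemma bc_neq0 n m : bc n m <> 0.
Proof.
  unfold bc. apply Rmult_integral_contrapositive_currified.
  apply pow_nonzero; lra.
  apply Rinv_neq_0_compat. apply Rmult_integral_contrapositive_currified.
  apply INR_fact_neq_0. apply Rgt_not_eq, gamma_half_pos; lia.
Qed.

Lemma bc_rec n k : bc n (S k) * (INR (S k) * (INR (S k) + INR n / 2)) = - bc n k.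
Proof.
  unfold bc.
  replace (2 * S k + n + 2)%nat with (S (S (2 * k + n + 2))) by lia.
  rewrite gamma_half_SS by lia.
  rewrite fact_simpl, mult_INR.
  replace (INR (2 * k + n + 2)) with (2 * (INR (S k) + INR n / 2)) by
    (rewrite !plus_INR, mult_INR, S_INR; simpl; field).
  pose proof (gamma_half_pos (2*k+n+2) ltac:(lia)).
  pose proof (INR_fact_neq_0 k).
  assert (0 < INR (S k)) by (apply lt_0_INR; lia).
  assert (0 <= INR n) by apply pos_INR.
  simpl pow. field. repeat split; lra.
Qed.

Lemma bc_radius n : CV_radius (bc n) = p_infty.
Proof.
  apply CV_radius_infinite_DAlembert. apply bc_neq0.
  apply is_lim_seq_le_le with (u := fun _ => 0) (w := fun m => / INR (S m)).
  - intros m. pose proof (bc_rec n m) as H.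
    assert (0 < INR (S m)) by (apply lt_0_INR; lia).
    assert (0 <= INR n) by apply pos_INR.
    assert (Hd : bc n (S m) / bc n m = - / (INR (S m) * (INR (S m) + INR n / 2))).
    { pose proof (bc_neq0 n (S m)). replace (bc n m) with (-(bc n (S m) * (INR (S m) * (INR (S m) + INR n / 2)))) by (rewrite H; ring). field. split; [|split]; try lra; nra. }
    rewrite Hd, Rabs_Ropp, Rabs_pos_eq.
    2: { apply Rlt_le, Rinv_0_lt_compat. nra. }
    split. apply Rlt_le, Rinv_0_lt_compat. nra.
    apply Rinv_le_contravar. auto. 
    assert (1 <= INR (S m)) by (apply (le_INR 1); lia). nra.
  - apply is_lim_seq_const.
  - apply (is_lim_seq_incr_1 (fun m => / INR m)). replace (Finite 0) with (Rbar_inv p_infty) by reflexivity. apply is_lim_seq_inv. apply is_lim_seq_INR. discriminate.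
Qed.

Lemma rad_ok (a : nat -> R) x : CV_radius a = p_infty -> Rbar_lt (Rabs x) (CV_radius a).
Proof. intros H; rewrite H; exact I. Qed.

Lemma bc_rad1 n : CV_radius (PS_derive (bc n)) = p_infty.
Proof. rewrite CV_radius_derive; apply bc_radius. Qed.
Lemma bc_rad2 n : CV_radius (PS_derive (PS_derive (bc n))) = p_infty.
Proof. rewrite !CV_radius_derive; apply bc_radius. Qed.

Lemma Q_ode n s :
  s * PSeries (PS_derive (PS_derive (bc n))) s
  + (INR n / 2 + 1) * PSeries (PS_derive (bc n)) s + PSeries (bc n) s = 0.
Proof.
  rewrite <- PSeries_incr_1, <- PSeries_scal.
  assert (E1 := CV_radius_inside _ s (rad_ok _ s (bc_rad2 n))).
  assert (E2 := CV_radius_inside _ s (rad_ok _ s (bc_rad1 n))).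
  assert (E3 := CV_radius_inside _ s (rad_ok _ s (bc_radius n))).
  rewrite <- PSeries_plus.
  2: { apply ex_pseries_incr_1. exact E1. }
  2: { apply ex_pseries_scal. apply Rmult_comm. exact E2. }
  rewrite <- PSeries_plus.
  2: { apply ex_pseries_plus. apply ex_pseries_incr_1. exact E1. apply ex_pseries_scal. apply Rmult_comm. exact E2. }
  2: exact E3.
  rewrite <- (PSeries_const_0 s). apply PSeries_ext. intros k.
  unfold PS_plus, PS_scal, PS_incr_1, PS_derive.
  destruct k as [|k].
  - pose proof (bc_rec n 0). change (0 + (INR n / 2 + 1) * (INR 1 * bc n 1) + bc n 0 = 0).
    rewrite S_INR in *. simpl INR in *. lra.
  - pose proof (bc_rec n (S k)).
    change (INR (S k) * (INR (S (S k)) * bc n (S (S k))) + (INR n / 2 + 1) * (INR (S (S k)) * bc n (S (S k))) + bc n (S k) = 0).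
    rewrite !S_INR in *. nra.
Qed.

Lemma bessel_eq n t : 0 < t ->
  bessel_J_half n t = Rpower (t/2) (INR n / 2) * PSeries (bc n) (t*t/4).
Proof.
  intros Ht.
  assert (HS : infinite_sum (bessel_term n t) (Rpower (t/2) (INR n / 2) * PSeries (bc n) (t*t/4))).
  { apply is_series_Reals.
    assert (E3 := CV_radius_inside _ (t*t/4) (rad_ok _ (t*t/4) (bc_radius n))).
    apply PSeries_correct in E3.
    apply is_series_ext with (a := fun k => scal (Rpower (t/2) (INR n / 2)) (scal (pow_n (t*t/4) k) (bc n k))).
    2: { exact (is_series_scal _ _ _ E3). }
    intros k. unfold bessel_term, bc. rewrite Rpower_plus, Rpower_pow by lra.
    rewrite pow_mult. replace ((t/2)^2) with (t*t/4) by field.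
    unfold scal; simpl. unfold mult; simpl. rewrite pow_n_pow. ring. }
  unfold bessel_J_half.
  pose proof (epsilon_spec (inhabits 0) (fun l => infinite_sum (bessel_term n t) l) (ex_intro _ _ HS)) as H.
  eapply uniqueness_sum; [exact H|exact HS].
Qed.

Definition Rf n t := PSeries (bc n) (t*t/4).
Definition R1f n t := t/2 * PSeries (PS_derive (bc n)) (t*t/4).
Definition R2f n t := PSeries (PS_derive (bc n)) (t*t/4) / 2
   + t*t/4 * PSeries (PS_derive (PS_derive (bc n))) (t*t/4).

Lemma der_eq (f : R -> R) x (l l' : R) : is_derive f x l -> l = l' -> is_derive f x l'.
Proof. intros H E; subst; exact H. Qed.

Lemma sq_der t : is_derive (fun t => t*t/4) t (t/2).
Proof. auto_derive; auto; try field. Qed.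

Lemma half_der t : is_derive (fun t => t/2) t (1/2).
Proof. auto_derive; auto; try field. Qed.

Lemma Rf_der n t : is_derive (Rf n) t (R1f n t).
Proof.
  unfold Rf, R1f.
  eapply is_derive_ext. intros; reflexivity.
  apply (is_derive_comp (PSeries (bc n)) (fun t => t*t/4)).
  apply is_derive_PSeries, rad_ok, bc_radius. apply sq_der.
Qed.

Lemma R1f_der n t : is_derive (R1f n) t (R2f n t).
Proof.
  unfold R1f, R2f. eapply der_eq.
  apply (is_derive_mult (fun t => t/2) (fun t => PSeries (PS_derive (bc n)) (t*t/4))).
  - apply half_der.
  - apply (is_derive_comp (PSeries (PS_derive (bc n))) (fun t => t*t/4)).
    apply is_derive_PSeries, rad_ok, bc_rad1. apply sq_der.
  - intros; apply Rmult_comm.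
  - simpl. unfold plus, mult, scal; simpl. unfold mult; simpl. field.
Qed.

Lemma Rf_ode n t : t * R2f n t + 2 * (INR n / 2 + 1/2) * R1f n t + t * Rf n t = 0.
Proof.
  unfold Rf, R1f, R2f. pose proof (Q_ode n (t*t/4)).
  replace (t * (PSeries (PS_derive (bc n)) (t * t / 4) / 2 +
      t * t / 4 * PSeries (PS_derive (PS_derive (bc n))) (t * t / 4)) +
   2 * (INR n / 2 + 1 / 2) * (t / 2 * PSeries (PS_derive (bc n)) (t * t / 4)) +
   t * PSeries (bc n) (t * t / 4)) with
   (t * (t * t / 4 * PSeries (PS_derive (PS_derive (bc n))) (t * t / 4) +
    (INR n / 2 + 1) * PSeries (PS_derive (bc n)) (t * t / 4) +
    PSeries (bc n) (t * t / 4))) by field.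
  rewrite H. ring.
Qed.

Lemma Rpower_pos' x y : 0 < Rpower x y.
Proof. unfold Rpower; apply exp_pos. Qed.

Lemma sturm (F F1 F2 : R -> R) p a b :
  1 <= p -> 0 < a -> a < b ->
  (forall t, is_derive F t (F1 t)) -> (forall t, is_derive F1 t (F2 t)) ->
  (forall t, 0 < t -> t * F2 t + 2*p*F1 t + t*F t = 0) ->
  F a = 0 -> F b = 0 -> (forall t, a < t < b -> 0 < F t) -> PI <= b - a.
Proof.
  intros Hp Ha Hab H1 H2 Hode Fa Fb Fpos.
  destruct (Rle_lt_dec PI (b - a)) as [|Hlt]; [assumption|exfalso].
  set (w := PI / (b - a)).
  assert (Hw : 1 < w).
  { unfold w. apply (Rmult_lt_reg_r (b-a)). lra. field_simplify; lra. }
  set (g := fun t => Rpower t (p-1) * ((p * F t + t * F1 t) * sin (w*(t-a)) - t * F t * (w * cos (w*(t-a))))).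
  set (dg := fun t => Rpower t (p-1) * (F t * sin (w*(t-a)) * (t*(w*w-1) + p*(p-1)/t))).
  assert (Hd : forall t, 0 < t -> derivable_pt_lim g t (dg t)).
  { intros t Ht. apply is_derive_Reals. unfold g, dg.
    assert (HP : is_derive (fun x => Rpower x (p-1)) t ((p-1) * (Rpower t (p-1) / t))).
    { apply is_derive_Reals. replace (Rpower t (p-1) / t) with (Rpower t (p-1-1)).
      apply derivable_pt_lim_power; auto.
      replace (p-1-1) with ((p-1) + - (1)) by ring. rewrite Rpower_plus, Rpower_Ropp, Rpower_1 by auto.
      reflexivity. }
    auto_derive.
    - repeat split; try (eexists; apply H1); try (eexists; apply H2); try (eexists; apply HP); auto.
    - replace (Derive (fun x : R => F x) t) with (F1 t) by (symmetry; apply is_derive_unique; apply H1).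
      replace (Derive (fun x : R => F1 x) t) with (F2 t) by (symmetry; apply is_derive_unique; apply H2).
      replace (Derive (fun x : R => Rpower x (p-1)) t) with ((p-1) * (Rpower t (p-1) / t)) by (symmetry; apply is_derive_unique; apply HP).
      assert (E : t*F2 t = -(2*p*F1 t + t*F t)) by (pose proof (Hode t Ht); lra).
      replace (F2 t) with (/t*(t*F2 t)) by (field; lra). rewrite E.
      replace (t + - a) with (t - a) by ring.
      field. lra. }
  destruct (MVT_cor2 g dg a b Hab) as [c [Hc Hc2]].
  { intros c Hc. apply Hd. lra. }
  assert (Hwb : w * (b - a) = PI) by (unfold w; field; lra).
  assert (Ga : g a = 0) by (unfold g; replace (w * (a - a)) with 0 by ring; rewrite Fa, sin_0; ring).
  assert (Gb : g b = 0) by (unfold g; rewrite Fb, Hwb, sin_PI; ring).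
  rewrite Ga, Gb in Hc.
  assert (0 < dg c).
  { unfold dg. apply Rmult_lt_0_compat. apply Rpower_pos'.
    apply Rmult_lt_0_compat. apply Rmult_lt_0_compat. apply Fpos; lra.
    apply sin_gt_0. apply Rmult_lt_0_compat; lra.
    rewrite <- Hwb. apply Rmult_lt_compat_l; lra.
    assert (0 <= p*(p-1)/c). { apply Rmult_le_pos. nra. apply Rlt_le, Rinv_0_lt_compat; lra. }
    assert (0 < c*(w*w-1)) by (apply Rmult_lt_0_compat; nra). lra. }
  nra.
Qed.

Lemma Rf_cont n : continuity (Rf n).
Proof.
  intros x. apply (derivable_continuous_pt _ _ (exist _ _ (proj1 (is_derive_Reals _ _ _) (Rf_der n x)))).
Qed.

Lemma Rf_zero n t : 0 < t -> (bessel_J_half n t = 0 <-> Rf n t = 0).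
Proof.
  intros Ht. rewrite bessel_eq by auto. unfold Rf.
  pose proof (Rpower_pos' (t/2) (INR n / 2)).
  split; intros H'.
  - apply Rmult_integral in H'. destruct H'; [lra|auto].
  - rewrite H'; ring.
Qed.

Lemma lam_mono (lam : nat -> R) (hlam_incr : forall j, (1 <= j)%nat -> lam j < lam (S j)) i k :
  (1 <= i)%nat -> (i < k)%nat -> lam i < lam k.
Proof.
  intros Hi Hk. induction Hk.
  - apply hlam_incr; auto.
  - pose proof (hlam_incr m ltac:(lia)). lra.
Qed.

Lemma lam_gap (n : nat) (lam : nat -> R)
  (hn : (1 <= n)%nat)
  (hlam_pos : forall j, (1 <= j)%nat -> 0 < lam j)
  (hlam_incr : forall j, (1 <= j)%nat -> lam j < lam (S j))
  (hlam_roots : forall t, 0 < t ->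
      (bessel_J_half n t = 0 <-> exists j, (1 <= j)%nat /\ lam j = t)) j :
  (1 <= j)%nat -> PI <= lam (S j) - lam j.
Proof.
  intros Hj.
  set (a := lam j). set (b := lam (S j)).
  assert (Ha : 0 < a) by (apply hlam_pos; auto).
  assert (Hab : a < b) by (apply hlam_incr; auto).
  assert (Za : Rf n a = 0).
  { apply Rf_zero; auto. apply hlam_roots; auto. exists j; auto. }
  assert (Zb : Rf n b = 0).
  { apply Rf_zero; try lra. apply hlam_roots; try lra. exists (S j); split; auto. }
  assert (NZ : forall t, a < t < b -> Rf n t <> 0).
  { intros t Ht E. apply Rf_zero in E; [|lra]. apply hlam_roots in E; [|lra].
    destruct E as [i [Hi Ei]].
    destruct (Nat.lt_ge_cases i (S j)) as [Hl|Hl].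
    - destruct (Nat.eq_dec i j) as [->|Hne]. unfold a in Ht; lra.
      pose proof (lam_mono lam hlam_incr i j Hi ltac:(lia)). unfold a in Ht; lra.
    - destruct (Nat.eq_dec i (S j)) as [->|Hne]. unfold b in Ht; lra.
      pose proof (lam_mono lam hlam_incr (S j) i ltac:(lia) ltac:(lia)). unfold b in Ht; lra. }
  assert (Hp : 1 <= INR n / 2 + 1/2).
  { assert (1 <= INR n) by (apply (le_INR 1); auto). lra. }
  set (m := (a + b) / 2).
  assert (Hm : a < m < b) by (unfold m; lra).
  destruct (Rlt_dec 0 (Rf n m)) as [Pos|Neg].
  - apply (sturm (Rf n) (R1f n) (R2f n) (INR n / 2 + 1/2)); auto.
    apply Rf_der. apply R1f_der. intros; apply Rf_ode.
    intros t Ht. destruct (Rlt_dec 0 (Rf n t)) as [|Nt]; auto. exfalso.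
    assert (Rf n t < 0) by (pose proof (NZ t Ht); lra).
    destruct (IVT_gen (Rf n) t m 0 (Rf_cont n)) as [x [Hx Ex]].
    { rewrite Rmin_left, Rmax_right; lra. }
    apply (NZ x); auto.
    unfold Rmin, Rmax in Hx; destruct (Rle_dec t m); lra.
  - assert (Rf n m < 0) by (pose proof (NZ m Hm); lra).
    apply (sturm (fun t => - Rf n t) (fun t => - R1f n t) (fun t => - R2f n t) (INR n / 2 + 1/2)); auto.
    intros t. apply (is_derive_opp (Rf n)). apply Rf_der.
    intros t. apply (is_derive_opp (R1f n)). apply R1f_der.
    intros t Ht. pose proof (Rf_ode n t). lra.
    rewrite Za; ring. rewrite Zb; ring.
    intros t Ht. destruct (Rlt_dec (Rf n t) 0) as [|Nt]; [lra|]. exfalso.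
    assert (0 < Rf n t) by (pose proof (NZ t Ht); lra).
    destruct (IVT_gen (Rf n) t m 0 (Rf_cont n)) as [x [Hx Ex]].
    { rewrite Rmin_right, Rmax_left; lra. }
    apply (NZ x); auto.
    unfold Rmin, Rmax in Hx; destruct (Rle_dec t m); lra.
Qed.

Lemma fac_bound a : 0 < a -> 0 < (1-a)^2 + a^2 /\ /((1-a)^2+a^2) <= 2 /\ /((1-a)^2+a^2) <= exp(4*a).
Proof.
  intros Ha.
  assert (Hq : 1/2 <= (1-a)^2 + a^2) by (pose proof (pow2_ge_0 (a - 1/2)); simpl in *; nra).
  split; [lra|split].
  - replace 2 with (/ (1/2)) by field. apply Rinv_le_contravar; lra.
  - apply Rle_trans with (1 + 4*a).
    + replace (/((1-a)^2+a^2)) with (1 / ((1-a)^2+a^2)) by (field; lra).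
      apply (Rmult_le_reg_r ((1-a)^2+a^2)). lra.
      unfold Rdiv. rewrite Rmult_assoc, Rinv_l by lra. nra.
    + left. apply exp_ineq1. lra.
Qed.

Lemma prod_range_S f k M : prod_range f k (S M) = if Nat.leb (S M) k then 1 else prod_range f k M * f (S M).
Proof. reflexivity. Qed.

Lemma prod_range_le (f g : nat -> R) k M :
  (forall m, (k < m)%nat -> 0 <= f m <= g m) ->
  0 <= prod_range f k M <= prod_range g k M.
Proof.
  intros H. induction M as [|M IH]; [simpl; lra|]. rewrite !prod_range_S.
  destruct (Nat.leb (S M) k) eqn:E. lra.
  apply Nat.leb_gt in E. destruct (H (S M) E). destruct IH.
  split. apply Rmult_le_pos; lra. apply Rmult_le_compat; lra.
Qed.

Lemma prod_range_ge1 (g : nat -> R) k M : (forall m, 1 <= g m) -> 1 <= prod_range g k M.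
Proof.
  intros H. induction M as [|M IH]; [simpl; lra|]. rewrite !prod_range_S.
  destruct (Nat.leb (S M) k). lra. pose proof (H (S M)). nra.
Qed.

Lemma prod_range_shift (g : nat -> R) k M : (forall m, 1 <= g m) -> prod_range g k M <= prod_range g 0 M.
Proof.
  intros H. induction M as [|M IH]; [simpl; lra|]. rewrite !prod_range_S.
  pose proof (prod_range_ge1 g 0 M H). pose proof (H (S M)).
  change (Nat.leb (S M) 0) with false.
  destruct (Nat.leb (S M) k). nra. nra.
Qed.

Definition bfun (N : nat) (K : R) (m : nat) : R :=
  if Nat.leb m N then 2 else exp (K / (INR m)^2).

Lemma exp_le x y : x <= y -> exp x <= exp y.
Proof. intros [H|H]; [left; apply exp_increasing; auto| subst; lra]. Qed.

Lemma bfun_ge1 N K m : 0 <= K -> 1 <= bfun N K m.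
Proof.
  intros HK. unfold bfun. destruct (Nat.leb m N) eqn:E. lra.
  apply Nat.leb_gt in E.
  rewrite <- exp_0. apply exp_le. apply Rmult_le_pos; auto.
  apply Rlt_le, Rinv_0_lt_compat. apply pow_lt. apply lt_0_INR. lia.
Qed.

Lemma bfun_prod N K M : 0 <= K ->
  prod_range (bfun N K) 0 M <= 2 ^ (Nat.min M N) * exp (2*K*(1/(INR N+1) - 1/(INR (Nat.max M N) + 1))).
Proof.
  intros HK. induction M as [|M IH].
  - simpl. replace (2 * K * (1 / (INR N + 1) - 1 / (INR N + 1))) with 0 by ring.
    rewrite exp_0. lra.
  - rewrite prod_range_S. change (Nat.leb (S M) 0) with false.
    unfold bfun at 2. destruct (Nat.leb (S M) N) eqn:E.
    + apply Nat.leb_le in E.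
      rewrite Nat.min_l by lia. rewrite Nat.max_r by lia.
      rewrite Nat.min_l in IH by lia. rewrite Nat.max_r in IH by lia.
      simpl pow. nra.
    + apply Nat.leb_gt in E.
      rewrite Nat.min_r by lia. rewrite Nat.max_l by lia.
      rewrite Nat.min_r in IH by lia. rewrite Nat.max_l in IH by lia.
      assert (HM : 0 < INR (S M)) by (apply lt_0_INR; lia).
      rewrite S_INR in *.
      assert (Hst : K / (INR M + 1)^2 <= 2*K*(1/(INR M + 1) - 1/(INR M + 1 + 1))).
      { replace (2*K*(1/(INR M + 1) - 1/(INR M + 1 + 1))) with (K * (2 / ((INR M + 1)*(INR M + 2)))) by (field; lra).
        unfold Rdiv. apply Rmult_le_compat_l; auto.
        apply Rle_trans with (2 * / ((INR M + 1)^2 * 2)).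
        - right. field. lra.
        - apply Rmult_le_compat_l. lra. apply Rinv_le_contravar.
          apply Rmult_lt_0_compat; lra. pose proof (pos_INR M). nra. }
      apply Rle_trans with (2 ^ N * exp (2 * K * (1 / (INR N + 1) - 1 / (INR M + 1))) * exp (K / (INR M + 1) ^ 2)).
      * apply Rmult_le_compat_r. left; apply exp_pos. exact IH.
      * rewrite Rmult_assoc, <- exp_plus. apply Rmult_le_compat_l. apply pow_le; lra.
        apply exp_le. lra.
Qed.

Lemma ln2_pos : 0 < ln 2.
Proof. rewrite <- ln_1. apply ln_increasing; lra. Qed.

Lemma final_bound D A : 0 <= D -> 0 < A ->
  exists N : nat, 2^N * exp(8*D*A/(INR N+1)) <= exp(sqrt A * (2*ln 2 + 8*D)).
Proof.
  intros HD HA. set (s := sqrt A).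
  assert (Hs : 0 < s) by (apply sqrt_lt_R0; auto).
  assert (Hss : s * s = A) by (apply sqrt_sqrt; lra).
  pose proof ln2_pos.
  destruct (Rle_dec A 1) as [HA1|HA1].
  - exists 0%nat. simpl. rewrite Rmult_1_l.
    apply exp_le. assert (A <= s) by nra. nra.
  - assert (Hs1 : 1 < s) by nra.
    destruct (archimed s) as [Hu1 Hu2].
    assert (Hz : (0 <= up s)%Z) by (apply le_IZR; simpl; lra).
    exists (Z.to_nat (up s)).
    assert (HN : INR (Z.to_nat (up s)) = IZR (up s)).
    { rewrite INR_IZR_INZ, Z2Nat.id; auto. }
    rewrite <- (Rpower_pow _ 2) by lra. unfold Rpower. rewrite <- exp_plus. apply exp_le.
    rewrite HN.
    assert (INR 0 <= IZR (up s)) by (simpl; lra).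
    assert (8 * D * A / (IZR (up s) + 1) <= 8 * D * s).
    { apply (Rmult_le_reg_r (IZR (up s) + 1)). lra.
      unfold Rdiv. rewrite Rmult_assoc, Rinv_l by lra. rewrite Rmult_1_r. rewrite <- Hss. replace (8*D*(s*s)) with ((8*D*s)*s) by ring. apply Rmult_le_compat_l; [|lra]. apply Rmult_le_pos; lra. }
    nra.
Qed.

Theorem lemma6p1 (n : nat) (r : R) (lam : nat -> R)
  (hn : (1 <= n)%nat) (hr : 0 < r)
  (hlam_pos : forall j, (1 <= j)%nat -> 0 < lam j)
  (hlam_incr : forall j, (1 <= j)%nat -> lam j < lam (S j))
  (hlam_roots : forall t, 0 < t ->
      (bessel_J_half n t = 0 <-> exists j, (1 <= j)%nat /\ lam j = t)) :
  let u := fun m : nat => - (lam (Nat.div (S m) 2) / (PI * r)) ^ 2 in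
  exists C : R, 0 < C /\
    forall (s x : R), (s = 1 \/ s = -1) -> x < 0 ->
      let f := fun j : nat => / abs2_one_minus_div x (s * x) (u j) in
      (forall k M : nat, (k < M)%nat ->
         prod_range f k M <= Rpower C (sqrt (Rabs x))) /\
      (forall (k : nat) (L : R),
         Un_cv (fun M => prod_range f k M) L ->
         L <= Rpower C (sqrt (Rabs x))).
Proof.
  intros u.
  set (c0 := Rmin (lam 1%nat) PI).
  assert (Hc0 : 0 < c0).
  { unfold c0. apply Rmin_glb_lt. apply hlam_pos; lia. apply PI_RGT_0. }
  assert (Hlin : forall j, (1 <= j)%nat -> c0 * INR j <= lam j).
  { intros j Hj. induction Hj.
    - simpl. rewrite Rmult_1_r. apply Rmin_l.
    - pose proof (lam_gap n lam hn hlam_pos hlam_incr hlam_roots m Hj).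
      rewrite S_INR. pose proof (Rmin_r (lam 1%nat) PI). fold c0 in H0. lra. }
  set (D := 4 * (PI * r)^2 / c0^2).
  assert (HD : 0 <= D).
  { unfold D. apply Rmult_le_pos. pose proof (pow2_ge_0 (PI*r)). lra.
    apply Rlt_le, Rinv_0_lt_compat. apply pow_lt; auto. }
  exists (exp (2 * ln 2 + 8 * D)). split. apply exp_pos.
  intros s x Hs Hx f.
  set (A := - x).
  assert (HA : 0 < A) by (unfold A; lra).
  assert (HRx : Rabs x = A) by (unfold A; apply Rabs_left; auto).
  assert (HC : Rpower (exp (2 * ln 2 + 8 * D)) (sqrt (Rabs x)) = exp (sqrt A * (2 * ln 2 + 8 * D))).
  { unfold Rpower. rewrite ln_exp, HRx. reflexivity. }
  rewrite HC.
  destruct (final_bound D A HD HA) as [N HN].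
  set (K := 4 * D * A).
  assert (HK : 0 <= K) by (unfold K; nra).
  assert (Hf : forall m, (1 <= m)%nat -> 0 <= f m <= bfun N K m).
  { intros m Hm.
    set (j := Nat.div (S m) 2).
    assert (Hj1 : (1 <= j)%nat).
    { unfold j. pose proof (Nat.div_mod (S m) 2). pose proof (Nat.mod_upper_bound (S m) 2). lia. }
    assert (Hjm : (m <= 2 * j)%nat).
    { unfold j. pose proof (Nat.div_mod (S m) 2). pose proof (Nat.mod_upper_bound (S m) 2). lia. }
    assert (Hjm' : INR m <= 2 * INR j) by (replace 2 with (INR 2) by reflexivity; rewrite <- mult_INR; apply le_INR; auto).
    set (l := lam j).
    assert (Hl : c0 * INR j <= l) by (apply Hlin; auto).
    assert (HjR : 1 <= INR j) by (apply (le_INR 1); auto).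
    assert (Hl0 : 0 < l) by nra.
    assert (HmR : 1 <= INR m) by (apply (le_INR 1); auto).
    set (P := (PI * r)^2).
    assert (HP : 0 < P) by (unfold P; apply pow_lt; apply Rmult_lt_0_compat; [apply PI_RGT_0|auto]).
    assert (Hu : u m = - (l^2 / P)) by (unfold u, P, l, j; pose proof PI_neq0; field; split; lra).
    set (a := x / u m).
    assert (Ha : a = A * P / l^2) by (unfold a, A; rewrite Hu; field; split; lra).
    assert (Ha0 : 0 < a).
    { rewrite Ha. apply Rmult_lt_0_compat. nra. apply Rinv_0_lt_compat. nra. }
    assert (Hab : a <= D * A / (INR m)^2).
    { rewrite Ha. unfold D. fold P.
      replace (4 * P / c0 ^ 2 * A / INR m ^ 2) with (A * P * / (c0^2 * INR m^2 / 4)) by (field; split; lra).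
      unfold Rdiv. apply Rmult_le_compat_l. nra.
      assert (Hcl : c0 * INR m <= 2 * l) by nra.
      assert (Hcm : 0 < c0 * INR m) by nra.
      replace (c0 ^ 2 * INR m ^ 2 * / 4) with ((c0 * INR m) * (c0 * INR m) / 4) by field.
      apply Rinv_le_contravar. nra.
      simpl. nra. }
    assert (Habs : abs2_one_minus_div x (s * x) (u m) = (1 - a)^2 + a^2).
    { assert (Hu0 : u m <> 0).
      { rewrite Hu. assert (0 < l^2 / P) by (apply Rmult_lt_0_compat; [nra|apply Rinv_0_lt_compat; auto]). lra. }
      unfold abs2_one_minus_div, a. destruct Hs as [-> | ->]; field; auto. }
    destruct (fac_bound a Ha0) as [Q1 [Q2 Q3]].
    unfold f. rewrite Habs. split.
    - left; apply Rinv_0_lt_compat; auto.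
    - unfold bfun. destruct (Nat.leb m N); auto.
      eapply Rle_trans; [exact Q3|]. apply exp_le. unfold K.
      replace (4 * D * A / INR m ^ 2) with (4 * (D * A / INR m ^ 2)) by (field; lra). lra. }
  assert (Bnd : forall k M, prod_range f k M <= exp (sqrt A * (2 * ln 2 + 8 * D))).
  { intros k M.
    apply Rle_trans with (prod_range (bfun N K) k M).
    { apply prod_range_le. intros m Hm. apply Hf. lia. }
    apply Rle_trans with (prod_range (bfun N K) 0 M).
    { apply prod_range_shift. intros; apply bfun_ge1; auto. }
    eapply Rle_trans. apply bfun_prod; auto.
    eapply Rle_trans; [|exact HN].
    apply Rmult_le_compat.
    - apply pow_le; lra.
    - left; apply exp_pos.
    - apply Rle_pow. lra. lia.
    - apply exp_le. unfold K.
      assert (0 <= 1 / (INR (Nat.max M N) + 1)).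
      { pose proof (pos_INR (Nat.max M N)). unfold Rdiv. rewrite Rmult_1_l. left; apply Rinv_0_lt_compat; lra. }
      pose proof (pos_INR N).
      replace (8 * D * A / (INR N + 1)) with (2 * (4*D*A) * (1 / (INR N + 1))) by (field; lra).
      assert (0 <= 2 * (4*D*A)) by nra. nra. }
  split.
  - intros k M _. apply Bnd.
  - intros k L HL.
    destruct (Rle_dec L (exp (sqrt A * (2 * ln 2 + 8 * D)))) as [|Hn]; auto. exfalso.
    destruct (HL (L - exp (sqrt A * (2 * ln 2 + 8 * D)))) as [M0 HM0]. lra.
    specialize (HM0 M0 (le_n _)). unfold Rdist in HM0.
    pose proof (Bnd k M0).
    apply Rabs_def2 in HM0. lra.
Qed.
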